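(* Let $G_1$ be a finite $k$-graph with $k\ge 3$. Then the line graph $G_2=L(G_1)$ is symmetric with respect to graph entropy, i.e., the uniform distribution on $V(G_2)$ maximizes $H(G_2,P)$ over all probability distributions $P$ on $V(G_2)$.
   Context: A $k$-graph is a $k$-regular graph whose fractional edge-colouring number equals $k$; here the fractional edge-colouring number $\chi'_f(G_1)$ is $\min\{\sum_{M}\lambda_M : \lambda\ge 0,\ \sum_M \lambda_M \mathbf b_M=\mathbf 1\}$, the sum ranging over all matchings $M$ of $G_1$ with characteristic vectors $\mathbf b_M\in\mathbb{R}^{E(G_1)}$. The line graph $L(G_1)$ has vertex set $E(G_1)$, two edges adjacent when they share an endpoint. For a finite graph $G$ with $V(G)=\{1,\dots,n\}$, the vertex packing polytope $VP(G)$ is the convex hull of the characteristic vectors of independent sets of $G$, and for a probability distribution $P$ on $V(G)$ the graph entropy is $H(G,P)=\min_{\mathbf a\in VP(G)}\sum_{i=1}^n p_i\log(1/a_i)$. *)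

(* Defs.v *)
From HB Require Import structures.
From mathcomp Require Import all_boot all_order all_algebra.
From mathcomp Require Import classical_sets reals exp.
Set Implicit Arguments. Unset Strict Implicit. Unset Printing Implicit Defensive.
Import Order.TTheory GRing.Theory Num.Theory.
Local Open Scope ring_scope.


Section Defs.
Variable R : realType.

Section Generic.
Variables (T : finType) (g : rel T).

Definition independent (S : {set T}) : bool :=
  [forall x in S, forall y in S, ~~ g x y].

Definition in_VP (a : T -> R) : Prop :=
  exists lam : {set T} -> R,
    [/\ forall S, 0 <= lam S,
        forall S, ~~ independent S -> lam S = 0,
        \sum_(S : {set T}) lam S = 1
      & forall i, a i = \sum_(S : {set T}) lam S * (i \in S)%:R].

Definition is_distribution (P : T -> R) : Prop :=
  (forall i, 0 <= P i) /\ \sum_(i : T) P i = 1.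

(* H(g,P) = min_{a in VP} sum_i p_i log(1/a_i), with 0 log(1/0) = 0;
   points a with a_i = 0 < p_i give value +oo and are omitted *)
Definition graph_entropy (P : T -> R) : R :=
  inf ([set h : R | exists a : T -> R,
         [/\ in_VP a, (forall i, 0 < P i -> 0 < a i)
           & h = \sum_(i : T) P i * ln ((a i)^-1)]])%classic.

Definition uniform_distr : T -> R := fun _ => (#|T|%:R)^-1.

Definition entropy_symmetric : Prop :=
  forall P : T -> R, is_distribution P ->
    graph_entropy P <= graph_entropy uniform_distr.
End Generic.

Section LineGraph.
Variables (V : finType) (e : rel V).

Definition is_edge (A : {set V}) : bool :=
  [exists x, exists y, e x y && (A == [set x; y])].

Definition edge_t : finType := {A : {set V} | is_edge A}.

Definition line_rel : rel edge_t :=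
  fun A B => (A != B) && [exists x, (x \in val A) && (x \in val B)].

Definition matching (M : {set edge_t}) : bool :=
  [forall A in M, forall B in M, (A != B) ==> [disjoint val A & val B]].

Definition frac_edge_chromatic : R :=
  inf ([set s : R | exists lam : {set edge_t} -> R,
         [/\ forall M, 0 <= lam M,
             forall M, ~~ matching M -> lam M = 0,
             forall f : edge_t, \sum_(M : {set edge_t}) lam M * (f \in M)%:R = 1
           & s = \sum_(M : {set edge_t}) lam M]])%classic.

Definition regular (k : nat) : Prop := forall x, #|[set y | e x y]| = k.

Definition k_graph (k : nat) : Prop :=
  regular k /\ frac_edge_chromatic = k%:R.
End LineGraph.
End Defs.

(* Main.v *)
Require Import Defs.
From HB Require Import structures.
From mathcomp Require Import all_boot all_order all_algebra.
From mathcomp Require Import classical_sets reals exp.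
Set Implicit Arguments. Unset Strict Implicit. Unset Printing Implicit Defensive.
Import Order.TTheory GRing.Theory Num.Theory.

From mathcomp Require Import lra.
From mathcomp Require sequences.
Import (notations) sequences.
Section Comb.
Variables (V : finType) (e : rel V).
Hypotheses (esym : symmetric e) (eirr : irreflexive e).

Lemma edge_at (A : edge_t e) x : x \in val A ->
  exists y, e x y /\ val A = [set x; y].
Proof.
case: A => /= A /existsP [a /existsP [b /andP [eab /eqP ->]]].
rewrite !inE => /orP [/eqP -> | /eqP ->]; first by exists b.
by exists a; split; [rewrite esym | rewrite finset.setUC].
Qed.

Lemma card_edge (A : edge_t e) : #|val A| = 2.
Proof.
case: A => /= A /existsP [a /existsP [b /andP [eab /eqP ->]]].
rewrite cards2; case: eqP => // ab; by move: eab; rewrite ab eirr.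
Qed.

Lemma double_count (S : {set edge_t e}) :
  \sum_(A in S) #|val A| = \sum_x #|[set A in S | x \in val A]|.
Proof.
transitivity (\sum_(A in S) \sum_x (x \in val A : nat)).
  by apply: eq_bigr => A _; rewrite -sum1_card big_mkcond.
rewrite exchange_big /=; apply: eq_bigr => x _.
rewrite -sum1_card big_mkcond [RHS]big_mkcond /=; apply: eq_bigr => A _.
by rewrite inE; case: (A \in S); case: (x \in val A).
Qed.

Definition other x (A : edge_t e) : V := odflt x [pick y in val A :\ x].

Lemma otherP x (A : edge_t e) : x \in val A ->
  e x (other x A) /\ val A = [set x; other x A].
Proof.
rewrite /other; move=> /edge_at [y [exy ->]].
have xy : x != y by apply/eqP => xy; move: exy; rewrite xy eirr.
rewrite setU1K ?inE 1?eq_sym //.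
case: pickP => [z|/(_ y)]; rewrite ?inE ?eqxx //.
  by move/eqP ->.
by rewrite eq_sym.
Qed.

Lemma degree x : #|[set A : edge_t e | x \in val A]| = #|[set y | e x y]|.
Proof.
have -> : [set y | e x y] = other x @: [set A : edge_t e | x \in val A].
  apply/setP => y; rewrite inE; apply/idP/imsetP.
    move=> exy.
    have He : is_edge e [set x; y].
      by apply/existsP; exists x; apply/existsP; exists y; rewrite exy eqxx.
    exists (exist (fun B : {set V} => is_edge e B) _ He); first by rewrite inE /= !inE eqxx.
    have := @otherP x (exist (fun B : {set V} => is_edge e B) _ He); rewrite /= !inE eqxx => /(_ isT) [_].
    have xy : x != y by apply/eqP => xy; move: exy; rewrite xy eirr.
    move=> /setP /(_ y); rewrite !inE eqxx orbT eq_sym (negbTE xy) /= => H; by apply/eqP; rewrite -H.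
  by move=> [A]; rewrite inE => /otherP [+ _] ->.
rewrite card_in_imset // => A B; rewrite !inE => /otherP [_ hA] /otherP [_ hB] eqo.
by apply: val_inj; rewrite hA hB eqo.
Qed.

Lemma handshake k : regular e k -> (#|edge_t e| * 2 = #|V| * k)%N.
Proof.
move=> reg.
have := double_count [set: edge_t e].
rewrite (eq_bigr (fun _ => 2%N)); last by move=> A _; rewrite card_edge.
rewrite sum_nat_const cardsT => ->.
rewrite (eq_bigr (fun _ => k)); first by rewrite sum_nat_const.
move=> x _; rewrite -(reg x) -degree; apply: eq_card => A; by rewrite !inE.
Qed.

Lemma indep_bound (S : {set edge_t e}) : independent (line_rel (e:=e)) S ->
  (#|S| * 2 <= #|V|)%N.
Proof.
move=> /forallP ind.
have := double_count S.
rewrite (eq_bigr (fun _ => 2%N)); last by move=> A _; rewrite card_edge.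
rewrite sum_nat_const => ->.
rewrite -[X in (_ <= X)%N]sum1_card; apply: leq_sum => x _.
apply/card_le1_eqP => A B; rewrite !inE => /andP [AS xA] /andP [BS xB].
move: (ind A); rewrite AS /= => /forallP /(_ B); rewrite BS /= /line_rel.
rewrite negb_and negbK => /orP [/eqP //|/existsPn /(_ x)].
by rewrite xA xB.
Qed.

Lemma matching_indep (M : {set edge_t e}) : matching M -> independent (line_rel (e:=e)) M.
Proof.
move=> /forallP mat; apply/forallP => A; apply/implyP => AM.
apply/forallP => B; apply/implyP => BM; rewrite /line_rel negb_and.
move: (mat A); rewrite AM /= => /forallP /(_ B); rewrite BM /= => /implyP H.
case: (eqVneq A B) => [//|/H dis]; apply/orP; right.
apply/existsPn => x; apply/negP => /andP [xA xB].
by move: dis => /disjoint_setI0 /setP /(_ x); rewrite !inE xA xB.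
Qed.

Lemma k_bound k (S : {set edge_t e}) : regular e k -> independent (line_rel (e:=e)) S ->
  (k * #|S| <= #|edge_t e|)%N.
Proof.
move=> /handshake H /indep_bound B.
have : (k * (#|S| * 2) <= k * #|V|)%N by rewrite leq_mul2l B orbT.
rewrite [X in (_ <= X)%N]mulnC -H => h.
by rewrite -(leq_pmul2r (isT : (0 < 2)%N)) -mulnA.
Qed.
End Comb.

Local Open Scope ring_scope.
Section Main.
Variable R : realType.

Lemma sum_card (T : finType) (S : {set T}) : \sum_i ((i \in S)%:R : R) = #|S|%:R.
Proof.
rewrite -sum1_card natr_sum [RHS]big_mkcond; apply: eq_bigr => i _.
by case: (i \in S).
Qed.

Lemma VP_bounds (T : finType) (g : rel T) (a : T -> R) : in_VP g a ->
  forall i, 0 <= a i <= 1.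
Proof.
move=> [lam [l0 _ l1 ha]] i; rewrite ha; apply/andP; split.
  by apply: sumr_ge0 => S _; apply: mulr_ge0 => //; case: (i \in S).
rewrite -[X in _ <= X]l1; apply: ler_sum => S _; have := l0 S.
by case: (i \in S) => h; rewrite ?mulr1 ?mulr0.
Qed.

Lemma entropy_lb0 (T : finType) (g : rel T) (P : T -> R) : is_distribution P ->
  lbound [set h : R | exists a : T -> R,
         [/\ in_VP g a, (forall i, 0 < P i -> 0 < a i)
           & h = \sum_(i : T) P i * ln ((a i)^-1)]]%classic 0.
Proof.
move=> [P0 _] h [a [va apos ->]]; apply: sumr_ge0 => i _.
have := P0 i; rewrite le_eqVlt => /orP [/eqP <-|Pi]; first by rewrite mul0r.
apply: mulr_ge0; first exact: ltW.
have ai := apos i Pi; have /andP [_ a1] := VP_bounds va i.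
by apply: ln_ge0; rewrite invf_ge1.
Qed.

Variables (V : finType) (e : rel V).
Hypotheses (esym : symmetric e) (eirr : irreflexive e).

Definition fracset : set R := [set s : R | exists lam : {set edge_t e} -> R,
         [/\ forall M, 0 <= lam M,
             forall M, ~~ matching M -> lam M = 0,
             forall f : edge_t e, \sum_(M : {set edge_t e}) lam M * (f \in M)%:R = 1
           & s = \sum_(M : {set edge_t e}) lam M]]%classic.

Lemma frac_pos (f0 : edge_t e) s : fracset s -> 0 < s.
Proof.
move=> [lam [l0 _ cov ->]]; apply: (@lt_le_trans _ _ 1) => //.
rewrite -(cov f0); apply: ler_sum => M _; have := l0 M.
by case: (f0 \in M) => h; rewrite ?mulr1 ?mulr0.
Qed.

Lemma frac_mem (f0 : edge_t e) s (P : edge_t e -> R) : is_distribution P -> fracset s ->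
  [set h : R | exists a : edge_t e -> R,
         [/\ in_VP (line_rel (e:=e)) a, (forall i, 0 < P i -> 0 < a i)
           & h = \sum_(i : edge_t e) P i * ln ((a i)^-1)]]%classic (ln s).
Proof.
move=> [_ P1] Fs; have s0 := frac_pos f0 Fs.
move: Fs => [lam [l0 lm cov sE]].
exists (fun _ => s^-1); split.
- exists (fun M => lam M / s); split.
  + by move=> M; apply: divr_ge0 => //; exact: ltW.
  + move=> M nind; rewrite lm ?mul0r //; apply: contra nind; exact: matching_indep.
  + by rewrite -mulr_suml -sE mulfV // gt_eqF.
  + move=> i; under eq_bigr do rewrite mulrAC.
    by rewrite -mulr_suml cov mul1r.
- by move=> i _; rewrite invr_gt0.
- by rewrite invrK -mulr_suml P1 mul1r.
Qed.

Lemma sum_a (a : edge_t e -> R) (lam : {set edge_t e} -> R) :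
  (forall i, a i = \sum_S lam S * (i \in S)%:R) ->
  \sum_i a i = \sum_S lam S * #|S|%:R.
Proof.
move=> ha; under eq_bigr do rewrite ha.
rewrite exchange_big /=; apply: eq_bigr => S _.
by rewrite -mulr_sumr sum_card.
Qed.

Lemma uniform_lb k (f0 : edge_t e) h : regular e k -> (0 < k)%N ->
  [set h : R | exists a : edge_t e -> R,
         [/\ in_VP (line_rel (e:=e)) a, (forall i, 0 < uniform_distr R i -> 0 < a i)
           & h = \sum_(i : edge_t e) uniform_distr R i * ln ((a i)^-1)]]%classic h ->
  ln k%:R <= h.
Proof.
move=> reg k0 [a [va apos ->]].
set m : R := #|edge_t e|%:R.
have m0 : 0 < m by rewrite ltr0n; apply/card_gt0P; exists f0.
have kR : 0 < (k%:R : R) by rewrite ltr0n.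
have ai i : 0 < a i by apply: apos; rewrite /uniform_distr invr_gt0.
have suma : k%:R * \sum_i a i <= m.
  move: va => [lam [l0 lind l1 ha]].
  rewrite (sum_a ha) mulr_sumr.
  apply: (@le_trans _ _ (\sum_S lam S * m)); last by rewrite -mulr_suml l1 mul1r.
  apply: ler_sum => S _.
  case: (boolP (independent (line_rel (e:=e)) S)) => [ind|nind]; last first.
    by rewrite lind // !(mul0r, mulr0).
  rewrite mulrCA; apply: ler_wpM2l => //.
  by rewrite /m -natrM ler_nat (k_bound esym eirr reg ind).
have bnd i : ln k%:R + 1 - k%:R * a i <= ln (a i)^-1.
  have := @le_ln1Dx R (k%:R * a i - 1).
  rewrite [1 + _]addrC subrK lnM ?posrE ?mulr_gt0 // lnV ?posrE //.
  move=> /(_ _); have : -1 < k%:R * a i - 1 by rewrite ltrBrDr addrC subrr mulr_gt0.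
  by move=> H /(_ H); lra.
apply: (@le_trans _ _ (\sum_i #|edge_t e|%:R^-1 * (ln k%:R + 1 - k%:R * a i))).
  rewrite -mulr_sumr sumrB sumr_const -mulr_sumr -/m.
  rewrite -[X in (ln k%:R + 1) *+ X]/(#|edge_t e|) -(mulr_natr (ln k%:R + 1)) -/m mulrBr mulrCA mulVf ?gt_eqF // mulr1.
  have : m^-1 * (k%:R * \sum_i a i) <= 1.
    by rewrite ler_pdivrMl // mulr1.
  lra.
by apply: ler_sum => i _; apply: ler_wpM2l => //; rewrite invr_ge0 ler0n.
Qed.
End Main.

Theorem mainTheorem5 (R : realType) (V : finType) (e : rel V) (k : nat) :
  symmetric e -> irreflexive e -> (3 <= k)%N -> @k_graph R V e k ->
  @entropy_symmetric R (edge_t e) (@line_rel V e).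
Proof.
move=> esym eirr k3 [reg frac] P Pd.
case: (pickP (fun _ : edge_t e => true)) => [f0 _|Hempty]; last first.
  have -> : P = uniform_distr R (T:=edge_t e).
    by apply: boolp.funext => f; have := Hempty f.
  exact: le_refl.
have k0 : (0 < k)%N by apply: leq_trans k3.
have kR : 0 < (k%:R : R) by rewrite ltr0n.
have fracE : inf ((@fracset R V e)) = k%:R by exact: frac.
have Fne : ((@fracset R V e) !=set0)%classic.
  apply/set0P/negP => /eqP F0; move: fracE; rewrite F0 inf0 => /eqP.
  by rewrite eq_sym gt_eqF.
have HP : graph_entropy (line_rel (e:=e)) P <= ln k%:R.
  rewrite leNgt; apply/negP => lt.
  have : inf ((@fracset R V e)) < sequences.expR (graph_entropy (line_rel (e:=e)) P).
    by rewrite fracE -[X in X < _](lnK (x:=k%:R)) ?posrE // ltr_expR.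
  move=> /(inf_lt Fne) [s Fs slt].
  have s0 := frac_pos f0 Fs.
  have : graph_entropy (line_rel (e:=e)) P <= ln s.
    apply: ge_inf; first by exists 0; exact: entropy_lb0.
    exact: frac_mem.
  rewrite leNgt => /negP; apply.
  by rewrite -[X in _ < X]expRK ltr_ln ?posrE ?expR_gt0.
have HU : ln k%:R <= graph_entropy (line_rel (e:=e)) (@uniform_distr R (edge_t e)).
  apply: lb_le_inf.
    have [s Fs] := Fne; exists (ln s); apply: frac_mem => //.
    split; first by move=> i; rewrite /uniform_distr invr_ge0 ler0n.
    rewrite sumr_const /uniform_distr -[X in _ *+ X]/(#|edge_t e|) -(mulr_natr (#|edge_t e|%:R^-1)) mulVf // pnatr_eq0.
    by apply/negP => /eqP/card0_eq/(_ f0).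
  by move=> h; apply: uniform_lb.
exact: le_trans HP HU.
Qed.
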